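(* Let $d$ be a prime and let $\{M_i\}_{i=1}^{d+1}$ be a complete set of $d+1$ pairwise mutually unbiased orthonormal bases of $\mathbb{C}^d$. Assume the extended CQC (ECQC) conjecture holds for this set, i.e. for every state $\sigma_{AB}$ on $\mathbb{C}^d\otimes\mathbb{C}^d$, $$I(A:B)\ \ge\ \min_{\mathcal{S}\subseteq\{1,\dots,d+1\},\,|\mathcal{S}|=d}\ \sum_{i\in\mathcal{S}} I(M_i^A:M_i^B).$$ Then every state $\rho_{AB}$ on $\mathbb{C}^d\otimes\mathbb{C}^d$ satisfies $$\sum_{i=1}^{d+1}H(M_i^AM_i^B)\ \ge\ 2\big((d+1)(\log(d)-1)\big)-I(A:B)-I_{\max}(M^A:M^B),$$ where $I_{\max}(M^A:M^B)=\max_{1\le i\le d+1} I(M_i^A:M_i^B)$.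
   Context: All logarithms are base 2 and $0\log0=0$. Bases $\{|z_i\rangle\}$, $\{|x_j\rangle\}$ of $\mathbb{C}^d$ are mutually unbiased if $|\langle z_i|x_j\rangle|^2=1/d$ for all $i,j$. $H(AB)$, $H(A)$, $H(B)$ are von Neumann entropies of $\rho_{AB}$ and its marginals, $I(A:B)=H(A)+H(B)-H(AB)$. For a basis $M_i=\{|m_j\rangle\}$, $M_i^A,M_i^B$ are the classical outcomes when both parties measure their subsystem in $M_i$, with joint distribution $p(j,k)=\langle m_j\otimes m_k|\rho_{AB}|m_j\otimes m_k\rangle$; $H(M_i^AM_i^B)$ is its Shannon entropy and $I(M_i^A:M_i^B)=H(M_i^A)+H(M_i^B)-H(M_i^AM_i^B)$. *)

(* Defs.v *)
From HB Require Import structures.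
From mathcomp Require Import all_boot all_order all_algebra.
From mathcomp Require Import boolp classical_sets reals exp.
From mathcomp Require Import complex mxtens.
Set Implicit Arguments. Unset Strict Implicit. Unset Printing Implicit Defensive.
Import Order.TTheory GRing.Theory Num.Theory.
Local Open Scope ring_scope.

Section QDefs.
Variable R : realType.
Local Notation C := R[i].

(* logarithm base 2; ln x = 0 for x <= 0 in mathcomp-analysis *)
Definition log2 (x : R) : R := ln x / ln 2.
(* eta x = - x log x, with 0 log 0 = 0 *)
Definition eta (x : R) : R := - (x * log2 x).

Definition adjmx m n (A : 'M[C]_(m, n)) : 'M[C]_(n, m) := (map_mx Num.conj A)^T.

Definition is_state n (rho : 'M[C]_n) : Prop :=
  adjmx rho = rho /\
  (forall v : 'cV[C]_n, 0 <= (adjmx v *m rho *m v) 0 0) /\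
  \tr rho = 1.

(* an orthonormal basis of C^d, given by the unitary matrix whose
   j-th column is |m_j> *)
Definition onbasis d (U : 'M[C]_d) : Prop := adjmx U *m U = 1%:M.

Definition mub d (Z X : 'M[C]_d) : Prop :=
  forall i j : 'I_d, `|(adjmx Z *m X) i j| ^+ 2 = (d%:R)^-1.

Definition complete_mub d (M : 'I_d.+1 -> 'M[C]_d) : Prop :=
  (forall i, onbasis (M i)) /\ (forall i i', i != i' -> mub (M i) (M i')).

(* index of |a> (x) |b> in C^d (x) C^d = C^(d*d) *)
Definition tidx d (a b : 'I_d) : 'I_(d * d) := mxtens_index (a, b).

Definition ptrB d (rho : 'M[C]_(d * d)) : 'M[C]_d :=
  \matrix_(a, a') \sum_(b < d) rho (tidx a b) (tidx a' b).
Definition ptrA d (rho : 'M[C]_(d * d)) : 'M[C]_d :=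
  \matrix_(b, b') \sum_(a < d) rho (tidx a b) (tidx a b').

(* eigenvalues (with multiplicity) : a vector lam with
   char_poly A = prod_i (X - lam_i); chosen classically *)
Definition eigvals n (A : 'M[C]_n) : 'rV[C]_n :=
  xget 0 [set lam : 'rV[C]_n | char_poly A = \prod_(i < n) ('X - (lam 0 i)%:P)].

Definition vN n (rho : 'M[C]_n) : R := \sum_(i < n) eta (complex.Re (eigvals rho 0 i)).

Definition HAB d (rho : 'M[C]_(d * d)) : R := vN rho.
Definition HA d (rho : 'M[C]_(d * d)) : R := vN (ptrB rho).
Definition HB d (rho : 'M[C]_(d * d)) : R := vN (ptrA rho).
Definition qmutinf d (rho : 'M[C]_(d * d)) : R := HA rho + HB rho - HAB rho.

(* joint outcome distribution when both parties measure in basis U: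
   p(j,k) = <m_j (x) m_k | rho | m_j (x) m_k> *)
Definition pjoint d (U : 'M[C]_d) (rho : 'M[C]_(d * d)) (j k : 'I_d) : R :=
  complex.Re (\sum_(a < d) \sum_(b < d) \sum_(a' < d) \sum_(b' < d)
     (Num.conj (U a j) * Num.conj (U b k) * rho (tidx a b) (tidx a' b')
        * U a' j * U b' k)).

Definition HMM d (U : 'M[C]_d) (rho : 'M[C]_(d * d)) : R :=
  \sum_(j < d) \sum_(k < d) eta (pjoint U rho j k).
Definition HMA d (U : 'M[C]_d) (rho : 'M[C]_(d * d)) : R :=
  \sum_(j < d) eta (\sum_(k < d) pjoint U rho j k).
Definition HMB d (U : 'M[C]_d) (rho : 'M[C]_(d * d)) : R :=
  \sum_(k < d) eta (\sum_(j < d) pjoint U rho j k).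
Definition cmutinf d (U : 'M[C]_d) (rho : 'M[C]_(d * d)) : R :=
  HMA U rho + HMB U rho - HMM U rho.

(* min over S subset of {1..d+1} with |S| = d of sum_{i in S} I(M_i^A:M_i^B);
   the default of the iterated min is itself one of the terms
   (S = all indices but the last) *)
Definition minS d (M : 'I_d.+1 -> 'M[C]_d) (rho : 'M[C]_(d * d)) : R :=
  \big[Num.min/ \sum_(i in [set i : 'I_d.+1 | i != ord_max]) cmutinf (M i) rho]_(S : {set 'I_d.+1} | #|S| == d)
     \sum_(i in S) cmutinf (M i) rho.

(* I_max = max_i I(M_i^A:M_i^B); the default is one of the terms *)
Definition Imax d (M : 'I_d.+1 -> 'M[C]_d) (rho : 'M[C]_(d * d)) : R :=
  \big[Num.max/cmutinf (M ord0) rho]_(i < d.+1) cmutinf (M i) rho.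

Definition ECQC d (M : 'I_d.+1 -> 'M[C]_d) : Prop :=
  forall sigma : 'M[C]_(d * d), is_state sigma -> qmutinf sigma >= minS M sigma.

End QDefs.

(* Main.v *)
Require Import Defs.
From HB Require Import structures.
From mathcomp Require Import all_boot all_order all_algebra.
From mathcomp Require Import boolp classical_sets reals exp.
From mathcomp Require Import complex mxtens.
From mathcomp Require Import sequences.
From mathcomp Require Import ring lra.
Import Order.TTheory GRing.Theory Num.Theory.
Set Implicit Arguments. Unset Strict Implicit. Unset Printing Implicit Defensive.
Local Open Scope ring_scope.
Local Notation "x %:C" := (real_complex _ x) : ring_scope.
Section Aux.
Variable R : realType.
Local Notation C := R[i].

Lemma ReD (x y : C) : complex.Re (x + y) = complex.Re x + complex.Re y.
Proof. by case: x; case: y. Qed.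

Lemma Re0 : complex.Re (0 : C) = 0. Proof. by []. Qed.

Lemma Re_sum (I : Type) (r : seq I) (P : pred I) (F : I -> C) :
  complex.Re (\sum_(i <- r | P i) F i) = \sum_(i <- r | P i) complex.Re (F i).
Proof. exact: (big_morph _ ReD Re0). Qed.

Lemma ReN (x : C) : complex.Re (- x) = - complex.Re x.
Proof. by case: x. Qed.

Lemma ReB (x y : C) : complex.Re (x - y) = complex.Re x - complex.Re y.
Proof. by rewrite ReD ReN. Qed.

Lemma ReJ (x : C) : complex.Re (x^*) = complex.Re x.
Proof. by case: x. Qed.

Lemma ReRM (r : R) (x : C) : complex.Re (r%:C * x) = r * complex.Re x.
Proof. by case: x => a b /=; rewrite !mul0r subr0. Qed.

Lemma ReR (r : R) : complex.Re r%:C = r. Proof. by []. Qed.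

Lemma conjR (r : R) : (r%:C : C)^* = r%:C.
Proof. exact: conjc_real. Qed.

Lemma Re_nat (n : nat) : complex.Re (n%:R : C) = n%:R.
Proof. by have -> : (n%:R : C) = (n%:R : R)%:C by rewrite rmorph_nat. Qed.

Lemma Re_natV (n : nat) : complex.Re ((n%:R)^-1 : C) = (n%:R)^-1.
Proof. by have -> : ((n%:R)^-1 : C) = ((n%:R)^-1 : R)%:C by rewrite fmorphV rmorph_nat. Qed.

Lemma ge0_Re (x : C) : 0 <= x -> 0 <= complex.Re x /\ x = (complex.Re x)%:C.
Proof.
case: x => a b; rewrite lecE /= => /andP[/eqP -> h]; split=> //.
Qed.

Lemma sum_deltar (T : pzRingType) (I : finType) (F : I -> T) (x : I) :
  \sum_y F y * (y == x)%:R = F x.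
Proof.
rewrite (bigD1 x) //= eqxx mulr1 big1 ?addr0 // => y /negbTE ->; exact: mulr0.
Qed.

Lemma sum_deltal (T : pzRingType) (I : finType) (F : I -> T) (x : I) :
  \sum_y (x == y)%:R * F y = F x.
Proof.
rewrite (bigD1 x) //= eqxx mul1r big1 ?addr0 // => y; rewrite eq_sym => /negbTE ->; exact: mul0r.
Qed.

Lemma cM (x y : C) : (x * y)^* = x^* * y^*. Proof. exact: rmorphM. Qed.
Lemma cD (x y : C) : (x + y)^* = x^* + y^*. Proof. exact: rmorphD. Qed.
Lemma cN (x : C) : (- x)^* = - x^*. Proof. exact: rmorphN. Qed.
Lemma cB (x y : C) : (x - y)^* = x^* - y^*. Proof. exact: rmorphB. Qed.
Lemma cK (x : C) : x^*^* = x. Proof. exact: conjCK. Qed.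
Lemma cnat (k : nat) : (k%:R : C)^* = k%:R. Proof. exact: rmorph_nat. Qed.
Lemma c0 : (0 : C)^* = 0. Proof. exact: rmorph0. Qed.
Lemma c1 : (1 : C)^* = 1. Proof. exact: rmorph1. Qed.
Lemma csum (I : Type) (r : seq I) (P : pred I) (F : I -> C) :
  (\sum_(i <- r | P i) F i)^* = \sum_(i <- r | P i) (F i)^*.
Proof. exact: rmorph_sum. Qed.
End Aux.
Section Ent.
Variable R : realType.

Lemma ln2_gt0 : 0 < ln (2 : R).
Proof. by apply: ln_gt0; rewrite ltr1n. Qed.

Lemma ln_le_sub1 (x : R) : 0 < x -> ln x <= x - 1.
Proof.
move=> x0; have := expR_ge1Dx (ln x); rewrite lnK ?posrE //; lra.
Qed.

Lemma eta_lb (a p : R) : 0 < a -> a <= 1 ->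
  p * (1 - ln a) - p ^+ 2 / a <= ln 2 * Defs.eta p.
Proof.
move=> a0 a1; have l2 := @ln2_gt0.
have la : ln a <= 0 by apply: ln_le0.
rewrite /Defs.eta /log2.
case: (lerP p 0) => hp.
  rewrite (ln0 hp) mul0r mulr0 oppr0 mulr0.
  have h1 : p * (1 - ln a) <= 0 by rewrite mulr_le0_ge0 //; lra.
  have h2 : 0 <= p ^+ 2 / a by rewrite divr_ge0 ?sqr_ge0 // ltW.
  lra.
have hq : ln (p / a) <= p / a - 1 by apply: ln_le_sub1; rewrite divr_gt0.
rewrite ln_div ?posrE // in hq.
have -> : ln 2 * - (p * (ln p / ln 2)) = - (p * ln p).
  by field; rewrite gt_eqF.
have -> : p ^+ 2 / a = p * (p / a) by rewrite expr2 mulrA.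
have : p * (ln p - ln a) <= p * (p / a - 1) by rewrite ler_pM2l.
lra.
Qed.
End Ent.
Section Quad.
Variable R : realType.
Local Notation C := R[i].

Lemma real_minor (a b m : R) : 0 <= a -> 0 <= b -> 0 <= m ->
  0 <= a * m ^+ 2 - 2 * m * a * m + a ^+ 2 * b * m ->
  0 <= a * b ^+ 2 - 2 * b * 1 * m + 1 ^+ 2 * b * m ->
  0 <= a * 1 ^+ 2 - 2 * 1 * 1 * m + 1 ^+ 2 * b * m ->
  m <= a * b.
Proof.
move=> a0 b0 m0 h1 h2 h3.
case: (ltrP 0 a) => ha; last first.
  have a00 : a = 0 by apply/eqP; rewrite eq_le ha a0.
  subst a; nra.
case: (ltrP 0 m) => hm; last by nra.
have : 0 <= a * m * (a * b - m) by nra.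
rewrite pmulr_rge0 ?mulr_gt0 //; lra.
Qed.

Lemma swap4 (I J K L : finType) (F : I -> J -> K -> L -> C) :
  \sum_i \sum_j \sum_k \sum_l F i j k l = \sum_k \sum_l \sum_i \sum_j F i j k l.
Proof.
rewrite pair_bigA [RHS]pair_bigA /=.
under eq_bigr do rewrite pair_bigA.
under [RHS]eq_bigr do rewrite pair_bigA.
by rewrite exchange_big.
Qed.

Definition qf n (A : 'M[C]_n) (v : 'I_n -> C) :=
  \sum_a \sum_b (v a)^* * A a b * v b.

Lemma qf_mx n (A : 'M[C]_n) (v : 'cV[C]_n) :
  (adjmx v *m A *m v) 0 0 = qf A (fun a => v a 0).
Proof.
rewrite mxE /qf; under eq_bigr do rewrite mxE mulr_suml.
rewrite exchange_big /=; apply: eq_bigr => a _; apply: eq_bigr => b _.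
by rewrite /adjmx !mxE.
Qed.

Lemma psd_state n (A : 'M[C]_n) : is_state A -> forall v, 0 <= qf A v.
Proof.
case=> _ [h _] v; have := h (\col_a v a); rewrite qf_mx.
by under eq_fun do rewrite mxE.
Qed.

Lemma herm_state n (A : 'M[C]_n) : is_state A -> forall x y, A y x = (A x y)^*.
Proof.
case=> h _ x y; have := congr1 (fun M : 'M[C]_n => M y x) h.
by rewrite /adjmx !mxE => <-.
Qed.

Lemma psd_sub n m (A : 'M[C]_n) (g : 'I_m -> 'I_n) :
  (forall v, 0 <= qf A v) ->
  forall v : 'I_m -> C, 0 <= \sum_a \sum_b (v a)^* * A (g a) (g b) * v b.
Proof.
move=> h v; have := h (fun k => \sum_a (k == g a)%:R * v a).
have -> : qf A (fun k => \sum_a (k == g a)%:R * v a) =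
  \sum_a \sum_b \sum_k \sum_l ((v a)^* * (k == g a)%:R * A k l * ((l == g b)%:R * v b)).
  rewrite /qf swap4; apply: eq_bigr => k _; apply: eq_bigr => l _.
  rewrite rmorph_sum mulr_suml mulr_suml; apply: eq_bigr => a _.
  rewrite mulr_sumr; apply: eq_bigr => b _.
  by rewrite rmorphM rmorph_nat; congr (_ * _ * _); exact: mulrC.
move=> H; apply: (le_trans H); rewrite le_eqVlt; apply/orP; left; apply/eqP.
apply: eq_bigr => a _; apply: eq_bigr => b _.
under eq_bigr => k _ do under eq_bigr => l _ do rewrite mulrCA mulrC.
under eq_bigr => k _ do rewrite sum_deltar.
under eq_bigr => k _ do rewrite -mulrA mulrCA -!mulrA mulrC.
by rewrite sum_deltar mulrA.
Qed.

End Quad.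
Section Minor.
Variable R : realType.
Local Notation C := R[i].

Lemma sum_v2 (I : finType) (G : I -> C) x y s w :
  \sum_a ((a == x)%:R * s + (a == y)%:R * w) * G a = s * G x + w * G y.
Proof.
under eq_bigr do rewrite mulrDl.
rewrite big_split /=; congr (_ + _).
  by under eq_bigr do rewrite -mulrA mulrC; rewrite sum_deltar.
by under eq_bigr do rewrite -mulrA mulrC; rewrite sum_deltar.
Qed.

Lemma qf_v2 n (A : 'M[C]_n) x y s w :
  qf A (fun k => (k == x)%:R * s + (k == y)%:R * w) =
  s^* * (s * A x x + w * A x y) + w^* * (s * A y x + w * A y y).
Proof.
rewrite /qf.
under eq_bigr => a _ do under eq_bigr => b _ do rewrite -mulrA [A a b * _]mulrC.
under eq_bigr => a _ do rewrite -mulr_sumr sum_v2.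
under eq_bigr => a _ do rewrite rmorphD !rmorphM !rmorph_nat.
rewrite sum_v2; congr (_ * _ + _ * _); ring.
Qed.

Lemma diag_psd n (A : 'M[C]_n) : (forall v, 0 <= qf A v) ->
  forall x, 0 <= A x x.
Proof.
move=> h x; have := h (fun k => (k == x)%:R * 1 + (k == x)%:R * 0).
by rewrite qf_v2 rmorph0 !mul0r !addr0 rmorph1 !mul1r.
Qed.

Lemma minor n (A : 'M[C]_n) : (forall v, 0 <= qf A v) ->
  (forall x y, A y x = (A x y)^*) ->
  forall x y, complex.Re ((A x y)^* * A x y) <=
              complex.Re (A x x) * complex.Re (A y y).
Proof.
move=> hp hh x y.
have [a0 ea] := ge0_Re (diag_psd hp x).
have [b0 eb] := ge0_Re (diag_psd hp y).
set a := complex.Re (A x x) in a0 ea *; set b := complex.Re (A y y) in b0 eb *.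
set z := A x y.
have [m0 em] := ge0_Re (mul_conjC_ge0 z).
have em' : z^* * z = (complex.Re (z * z^*))%:C by rewrite mulrC.
rewrite [z^* * z]mulrC.
set m := complex.Re (z * z^*) in m0 em em' *.
case: (eqVneq x y) => [exy|nxy].
  by subst y; rewrite /m /z /b ea conjR -rmorphM /=.
have key : forall t u : R, 0 <= a * t ^+ 2 - 2 * t * u * m + u ^+ 2 * b * m.
  move=> t u.
  have := hp (fun k => (k == x)%:R * t%:C + (k == y)%:R * (- (u%:C * (A y x)))).
  rewrite qf_v2 (hh x y) -/z cN cM cK !conjR ea eb.
  have -> : t%:C * (t%:C * a%:C + - (u%:C * z^*) * z) +
      - (u%:C * z) * (t%:C * z^* + - (u%:C * z^*) * b%:C) =
      t%:C * t%:C * a%:C - 2%:R * t%:C * u%:C * (z * z^*) + u%:C * u%:C * b%:C * (z * z^*).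
    ring.
  rewrite em.
  have -> : t%:C * t%:C * a%:C - 2%:R * t%:C * u%:C * m%:C + u%:C * u%:C * b%:C * m%:C
     = (a * (t * t) - 2 * t * u * m + (u * u) * b * m)%:C.
    by rewrite rmorphD rmorphB !rmorphM rmorph_nat; ring.
  by rewrite ler0c !expr2.
apply: real_minor => //; exact: key.
Qed.
End Minor.
Section IP.
Variable R : realType.
Local Notation C := R[i].

Definition ipf n (X Y : 'I_n -> 'I_n -> C) := \sum_a \sum_b (X a b)^* * Y a b.

Lemma purity n (A : 'M[C]_n) : (forall v, 0 <= qf A v) ->
  (forall x y, A y x = (A x y)^*) -> \sum_a A a a = 1 ->
  complex.Re (ipf A A) <= 1.
Proof.
move=> hp hh htr.
rewrite /ipf Re_sum; under eq_bigr do rewrite Re_sum.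
apply: (@le_trans _ _ (\sum_a \sum_b complex.Re (A a a) * complex.Re (A b b))).
  apply: ler_sum => a _; apply: ler_sum => b _; exact: minor.
under eq_bigr do rewrite -mulr_sumr.
by rewrite -mulr_suml -Re_sum htr /= mulr1.
Qed.

Lemma ipf_sym n (X Y : 'I_n -> 'I_n -> C) : ipf Y X = (ipf X Y)^*.
Proof.
rewrite /ipf csum; apply: eq_bigr => a _; rewrite csum; apply: eq_bigr => b _.
by rewrite cM cK mulrC.
Qed.

Lemma ipf_ge0 n (X : 'I_n -> 'I_n -> C) : 0 <= complex.Re (ipf X X).
Proof.
rewrite /ipf Re_sum; apply: sumr_ge0 => a _; rewrite Re_sum; apply: sumr_ge0 => b _.
by rewrite mulrC; case: (ge0_Re (mul_conjC_ge0 (X a b))).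
Qed.

Lemma ipf_subl n (X Y Z : 'I_n -> 'I_n -> C) :
  ipf (fun a b => X a b - Y a b) Z = ipf X Z - ipf Y Z.
Proof.
rewrite /ipf -sumrB; apply: eq_bigr => a _; rewrite -sumrB; apply: eq_bigr => b _.
by rewrite cB mulrBl.
Qed.

Lemma ipf_subr n (X Y Z : 'I_n -> 'I_n -> C) :
  ipf X (fun a b => Y a b - Z a b) = ipf X Y - ipf X Z.
Proof.
rewrite /ipf -sumrB; apply: eq_bigr => a _; rewrite -sumrB; apply: eq_bigr => b _.
by rewrite mulrBr.
Qed.

Lemma ipf_sumr n (I : finType) (X : 'I_n -> 'I_n -> C) (c : I -> R)
  (F : I -> 'I_n -> 'I_n -> C) :
  ipf X (fun a b => \sum_k (c k)%:C * F k a b) = \sum_k (c k)%:C * ipf X (F k).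
Proof.
rewrite /ipf; under eq_bigr do under eq_bigr do rewrite mulr_sumr.
under [RHS]eq_bigr do rewrite mulr_sumr.
under [RHS]eq_bigr do under eq_bigr do rewrite mulr_sumr.
rewrite exchange_big /=.
under eq_bigr do rewrite exchange_big /=.
rewrite exchange_big /=; apply: eq_bigr => k _; rewrite exchange_big /=.
apply: eq_bigr => a _; apply: eq_bigr => b _; by rewrite mulrCA.
Qed.

Lemma ipf_suml n (I : finType) (X : 'I_n -> 'I_n -> C) (c : I -> R)
  (F : I -> 'I_n -> 'I_n -> C) :
  ipf (fun a b => \sum_k (c k)%:C * F k a b) X = \sum_k (c k)%:C * ipf (F k) X.
Proof.
rewrite ipf_sym ipf_sumr csum; apply: eq_bigr => k _.
by rewrite cM conjR -ipf_sym.
Qed.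

End IP.
Section Bessel.
Variable R : realType.
Local Notation C := R[i].
Variables (d : nat) (U : 'I_d.+1 -> 'M[C]_d) (A : 'M[C]_d).
Hypotheses (hd : (0 < d)%N) (hU : forall i, onbasis (U i))
  (hM : forall i i', i != i' -> mub (U i) (U i')) (htr : \sum_a A a a = 1).

Definition pp (i : 'I_d.+1) (j : 'I_d) :=
  complex.Re (\sum_a \sum_b (U i a j)^* * A a b * U i b j).
Definition Qm i j := fun a b : 'I_d => U i a j * (U i b j)^*.

Lemma UUt i b a : \sum_j U i b j * (U i a j)^* = (b == a)%:R.
Proof.
have := congr1 (fun M : 'M[C]_d => M b a) (mulmx1C (hU i)).
rewrite !mxE => <-; apply: eq_bigr => j _; by rewrite /adjmx !mxE.
Qed.

Lemma sum_pp i : \sum_j pp i j = 1.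
Proof.
rewrite /pp -Re_sum exchange_big /=.
under eq_bigr do rewrite exchange_big /=.
under eq_bigr do under eq_bigr do (under eq_bigr do rewrite mulrC mulrA; rewrite -mulr_suml mulrC UUt).
under eq_bigr do rewrite sum_deltar.
by rewrite htr.
Qed.

Lemma ipQQ i j i' j' :
  ipf (Qm i j) (Qm i' j') =
  (\sum_a (U i a j)^* * U i' a j') * (\sum_a (U i a j)^* * U i' a j')^*.
Proof.
rewrite /ipf csum mulr_suml; apply: eq_bigr => a _.
rewrite mulr_sumr; apply: eq_bigr => b _.
rewrite /Qm !cM !cK; ring.
Qed.

Lemma G_val i j i' j' : complex.Re (ipf (Qm i j) (Qm i' j')) =
  if i == i' then (j == j')%:R else (d%:R)^-1.
Proof.
rewrite ipQQ.
have -> : \sum_a (U i a j)^* * U i' a j' = (adjmx (U i) *m U i') j j'.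
  by rewrite mxE; apply: eq_bigr => a _; rewrite /adjmx !mxE.
case: (eqVneq i i') => [<-|nii].
  rewrite (hU i) mxE.
  by case: (j == j'); rewrite ?c1 ?c0 ?mulr1 ?mulr0.
by rewrite -normCK (hM nii) Re_natV.
Qed.

Lemma p_ip i j : complex.Re (ipf A (Qm i j)) = pp i j.
Proof.
rewrite ipf_sym ReJ /pp /ipf; congr complex.Re; apply: eq_bigr => a _.
apply: eq_bigr => b _; rewrite /Qm cM cK; ring.
Qed.

Lemma bessel : \sum_i \sum_j pp i j ^+ 2 <= complex.Re (ipf A A) + (d.+1)%:R / d%:R.
Proof.
set e := (d%:R : R)^-1.
have de : d%:R * e = 1 by rewrite divff // pnatr_eq0 -lt0n.
pose c (k : 'I_d.+1 * 'I_d) := pp k.1 k.2 - e.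
pose W := fun a b => \sum_k (c k)%:C * Qm k.1 k.2 a b.
have h0 := ipf_ge0 (fun a b => A a b - W a b).
rewrite ipf_subl !ipf_subr !ReB in h0.
have hAW : complex.Re (ipf A W) = \sum_k c k * pp k.1 k.2.
  rewrite ipf_sumr Re_sum; apply: eq_bigr => k _; by rewrite ReRM p_ip.
have hWA : complex.Re (ipf W A) = \sum_k c k * pp k.1 k.2.
  by rewrite ipf_sym ReJ.
have hWW : complex.Re (ipf W W) = \sum_k c k ^+ 2.
  rewrite ipf_suml Re_sum; apply: eq_bigr => k _.
  rewrite ReRM ipf_sumr Re_sum expr2; congr (_ * _).
  under eq_bigr do rewrite ReRM G_val.
  have -> : \sum_l c l * (if k.1 == l.1 then (k.2 == l.2)%:R else e) =
      \sum_i \sum_j c (i, j) * (if k.1 == i then (k.2 == j)%:R else e).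
    by rewrite pair_bigA; apply: eq_bigr => -[i j].
  rewrite (bigD1 k.1) //= eqxx.
  rewrite [X in _ + X]big1 ?addr0.
    under eq_bigr do rewrite eq_sym.
    by rewrite sum_deltar; case: k.
  move=> i /negbTE; rewrite eq_sym => ->.
  rewrite -mulr_suml /c sumrB sum_pp sumr_const card_ord -mulr_natr [e * _]mulrC de subrr mul0r.
  by [].
rewrite hAW hWA hWW in h0.
rewrite pair_bigA /=.
have -> : \sum_(k : 'I_d.+1 * 'I_d) pp k.1 k.2 ^+ 2 =
    \sum_k (2 * (c k * pp k.1 k.2) - c k ^+ 2) + \sum_(k : 'I_d.+1 * 'I_d) e ^+ 2.
  rewrite -big_split /=; apply: eq_bigr => k _; rewrite /c; ring.
rewrite sumrB -mulr_sumr sumr_const card_prod !card_ord.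
have -> : e ^+ 2 *+ (d.+1 * d) = (d.+1)%:R / d%:R.
  rewrite -mulr_natr natrM /e; field; by rewrite pnatr_eq0 -lt0n.
rewrite -/e; lra.
Qed.

End Bessel.
Section Marg.
Variable R : realType.
Local Notation C := R[i].

Lemma marg_entropy (d : nat) (U : 'I_d.+1 -> 'M[C]_d) (A : 'M[C]_d) :
  (1 < d)%N -> (forall i, onbasis (U i)) ->
  (forall i i', i != i' -> mub (U i) (U i')) -> \sum_a A a a = 1 ->
  complex.Re (ipf A A) <= 1 ->
  (d.+1)%:R * (log2 (d%:R : R) - 1) <= \sum_i \sum_j Defs.eta (pp U A i j).
Proof.
move=> hd hU hM htr hpur.
have hd0 : (0 < d)%N by apply: ltn_trans hd.
set D := (d%:R : R).
have D2 : 2 <= D by rewrite /D ler_nat.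
have D0 : 0 < D by lra.
set a := 2 / D.
have a0 : 0 < a by rewrite /a divr_gt0.
have a1 : a <= 1 by rewrite /a ler_pdivrMr // mul1r.
have l2 := @ln2_gt0 R.
have la : ln a = ln 2 - ln D by rewrite /a ln_div ?posrE.
have hS := bessel hd0 hU hM htr.
set S := \sum_i \sum_j pp U A i j ^+ 2 in hS.
have h1 : \sum_i \sum_j (pp U A i j * (1 - ln a) - pp U A i j ^+ 2 / a)
   <= \sum_i \sum_j ln 2 * Defs.eta (pp U A i j).
  by apply: ler_sum => i _; apply: ler_sum => j _; apply: eta_lb.
have e1 : \sum_i \sum_j (pp U A i j * (1 - ln a) - pp U A i j ^+ 2 / a)
   = (d.+1)%:R * (1 - ln a) - S / a.
  under eq_bigr do rewrite sumrB -!mulr_suml (sum_pp hU htr) mul1r.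
  by rewrite sumrB sumr_const card_ord -mulr_suml mulr_natl.
have e2 : \sum_i \sum_j ln 2 * Defs.eta (pp U A i j) =
    ln 2 * \sum_i \sum_j Defs.eta (pp U A i j).
  by rewrite mulr_sumr; apply: eq_bigr => i _; rewrite mulr_sumr.
rewrite e1 e2 in h1.
have hSa : S / a <= (2 * D + 1) / 2.
  have -> : S / a = S * (D / 2).
    by rewrite /a; field; rewrite pnatr_eq0 -lt0n.
  apply: (@le_trans _ _ ((1 + (d.+1)%:R / D) * (D / 2))).
    apply: ler_wpM2r; first by rewrite divr_ge0 // ltW.
    lra.
  by rewrite -addn1 natrD -/D; rewrite le_eqVlt; apply/orP; left; apply/eqP; field; rewrite pnatr_eq0 -lt0n.
rewrite /log2.
have -> : (d.+1)%:R * (ln D / ln 2 - 1) = ((d.+1)%:R * (ln D - ln 2)) / ln 2.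
  by field; rewrite gt_eqF.
rewrite ler_pdivrMr // [_ * ln 2]mulrC.
apply: (le_trans _ h1).
rewrite la -addn1 natrD -/D.
lra.
Qed.
End Marg.
Section Conn.
Variable R : realType.
Local Notation C := R[i].

Lemma UUt1 d (U : 'M[C]_d) : onbasis U -> forall b a,
  \sum_j U b j * (U a j)^* = (b == a)%:R.
Proof.
move=> hU b a.
have := congr1 (fun M : 'M[C]_d => M b a) (mulmx1C hU).
rewrite !mxE => <-; apply: eq_bigr => j _; by rewrite /adjmx !mxE.
Qed.

Lemma sum_tidx d (F : 'I_(d * d) -> C) :
  \sum_k F k = \sum_a \sum_b F (tidx a b).
Proof.
rewrite pair_bigA /= (reindex (@mxtens_index d d)) /=.
  by apply: eq_bigr => -[a b].
apply: onW_bij; exists (@mxtens_unindex d d).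
  exact: mxtens_indexK.
exact: mxtens_unindexK.
Qed.

Lemma trB d (rho : 'M[C]_(d * d)) : is_state rho -> \sum_a ptrB rho a a = 1.
Proof.
case=> _ [_ htr]; rewrite -htr /mxtrace sum_tidx.
by apply: eq_bigr => a _; rewrite mxE.
Qed.

Lemma trA d (rho : 'M[C]_(d * d)) : is_state rho -> \sum_a ptrA rho a a = 1.
Proof.
case=> _ [_ htr]; rewrite -htr /mxtrace sum_tidx exchange_big /=.
by apply: eq_bigr => a _; rewrite mxE.
Qed.

Lemma hermB d (rho : 'M[C]_(d * d)) : is_state rho ->
  forall x y, ptrB rho y x = (ptrB rho x y)^*.
Proof.
move=> hs x y; rewrite !mxE csum; apply: eq_bigr => b _.
exact: herm_state.
Qed.

Lemma hermA d (rho : 'M[C]_(d * d)) : is_state rho ->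
  forall x y, ptrA rho y x = (ptrA rho x y)^*.
Proof.
move=> hs x y; rewrite !mxE csum; apply: eq_bigr => b _.
exact: herm_state.
Qed.

Lemma psdB d (rho : 'M[C]_(d * d)) : is_state rho ->
  forall v, 0 <= qf (ptrB rho) v.
Proof.
move=> hs v; have hp := psd_state hs.
have -> : qf (ptrB rho) v =
    \sum_b \sum_a \sum_a' (v a)^* * rho (tidx a b) (tidx a' b) * v a'.
  rewrite /qf [RHS]exchange_big /=.
  under [RHS]eq_bigr do rewrite exchange_big /=.
  apply: eq_bigr => a _; apply: eq_bigr => a' _.
  by rewrite mxE mulr_sumr mulr_suml.
apply: sumr_ge0 => b _; exact: (psd_sub (fun a => tidx a b) hp).
Qed.

Lemma psdA d (rho : 'M[C]_(d * d)) : is_state rho ->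
  forall v, 0 <= qf (ptrA rho) v.
Proof.
move=> hs v; have hp := psd_state hs.
have -> : qf (ptrA rho) v =
    \sum_a \sum_b \sum_b' (v b)^* * rho (tidx a b) (tidx a b') * v b'.
  rewrite /qf [RHS]exchange_big /=.
  under [RHS]eq_bigr do rewrite exchange_big /=.
  apply: eq_bigr => a _; apply: eq_bigr => a' _.
  by rewrite mxE mulr_sumr mulr_suml.
apply: sumr_ge0 => a _; exact: (psd_sub (fun b => tidx a b) hp).
Qed.

End Conn.
Section Marg2.
Variable R : realType.
Local Notation C := R[i].

Lemma margA d (U : 'M[C]_d) (rho : 'M[C]_(d * d)) : onbasis U -> forall j,
  \sum_k pjoint U rho j k =
  complex.Re (\sum_a \sum_b (U a j)^* * ptrB rho a b * U b j).
Proof.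
move=> hU j; rewrite /pjoint -Re_sum; congr complex.Re.
rewrite exchange_big /=.
under eq_bigr do rewrite exchange_big /=.
under eq_bigr do under eq_bigr do rewrite exchange_big /=.
under eq_bigr do under eq_bigr do under eq_bigr do rewrite exchange_big /=.
have inner : forall a b a' b',
  \sum_k (U a j)^* * (U b k)^* * rho (tidx a b) (tidx a' b') * U a' j * U b' k
  = (U a j)^* * rho (tidx a b) (tidx a' b') * U a' j * (b' == b)%:R.
  move=> a b a' b'; rewrite -(UUt1 hU) mulr_sumr; apply: eq_bigr => k _; ring.
under eq_bigr do under eq_bigr do under eq_bigr do under eq_bigr do rewrite inner.
under eq_bigr do under eq_bigr do under eq_bigr do rewrite sum_deltar.
under [RHS]eq_bigr do under eq_bigr do rewrite mxE mulr_sumr mulr_suml.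
under [RHS]eq_bigr do rewrite exchange_big /=.
done.
Qed.

Lemma margB d (U : 'M[C]_d) (rho : 'M[C]_(d * d)) : onbasis U -> forall k,
  \sum_j pjoint U rho j k =
  complex.Re (\sum_a \sum_b (U a k)^* * ptrA rho a b * U b k).
Proof.
move=> hU k; rewrite /pjoint -Re_sum; congr complex.Re.
rewrite exchange_big /=.
under eq_bigr do rewrite exchange_big /=.
under eq_bigr do under eq_bigr do rewrite exchange_big /=.
under eq_bigr do under eq_bigr do under eq_bigr do rewrite exchange_big /=.
have inner : forall a b a' b',
  \sum_j (U a j)^* * (U b k)^* * rho (tidx a b) (tidx a' b') * U a' j * U b' k
  = (U b k)^* * rho (tidx a b) (tidx a' b') * U b' k * (a' == a)%:R.
  move=> a b a' b'; rewrite -(UUt1 hU) mulr_sumr; apply: eq_bigr => j _; ring.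
under eq_bigr do under eq_bigr do under eq_bigr do under eq_bigr do rewrite inner.
under eq_bigr do under eq_bigr do rewrite exchange_big /=.
under eq_bigr do under eq_bigr do under eq_bigr do rewrite sum_deltar.
under [RHS]eq_bigr do under eq_bigr do rewrite mxE mulr_sumr mulr_suml.
under [RHS]eq_bigr do rewrite exchange_big /=.
by rewrite [RHS]exchange_big.
Qed.

Lemma le_bigmax_any (I : finType) (F : I -> R) (x0 : R) (i0 : I) :
  F i0 <= \big[Num.max/x0]_(i : I) F i.
Proof.
have : i0 \in index_enum I by rewrite mem_index_enum.
elim: (index_enum I) => [//|a r IH].
rewrite inE big_cons le_max => /orP[/eqP->|/IH->]; by rewrite ?lexx ?orbT.
Qed.

Lemma sum_minus_one d (F : 'I_d.+1 -> R) (S : {set 'I_d.+1}) :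
  #|S| == d -> \sum_i F i - \big[Num.max/F ord0]_(i < d.+1) F i <= \sum_(i in S) F i.
Proof.
move=> hS.
rewrite (bigID (mem S)) /=.
have : #|~: S| == 1%N.
  have := finset.cardsC S; rewrite card_ord (eqP hS) => /eqP.
  by rewrite -[X in _ == X]addn1 eqn_add2l.
case/cards1P => i0 hi0.
have -> : \sum_(i | i \notin S) F i = \sum_(i in [set i0]) F i.
  by apply: eq_bigl => i; rewrite -hi0 inE.
rewrite big_set1.
have := le_bigmax_any F (F ord0) i0.
lra.
Qed.

End Marg2.
Unset Implicit Arguments.
Theorem proposition2 (R : realType) (d : nat) (M : 'I_d.+1 -> 'M[R[i]]_d) :
  prime d -> complete_mub M -> ECQC M ->
  forall rho : 'M[R[i]]_(d * d), is_state rho ->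
    \sum_(i < d.+1) HMM (M i) rho >=
      2 * ((d.+1)%:R * (log2 (d%:R : R) - 1)) - qmutinf rho - Imax M rho.
Proof.
move=> hp [hU hM] hE rho hs.
have hd : (1 < d)%N by apply: prime_gt1.
set T := (d.+1)%:R * (log2 (d%:R : R) - 1).
have hA : T <= \sum_i HMA (M i) rho.
  have := marg_entropy hd hU hM (trB hs) (purity (psdB hs) (hermB hs) (trB hs)).
  suff -> : \sum_i \sum_j Defs.eta (pp M (ptrB rho) i j) = \sum_i HMA (M i) rho by [].
  apply: eq_bigr => i _; rewrite /HMA; apply: eq_bigr => j _.
  by rewrite (margA _ (hU i)).
have hB : T <= \sum_i HMB (M i) rho.
  have := marg_entropy hd hU hM (trA hs) (purity (psdA hs) (hermA hs) (trA hs)).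
  suff -> : \sum_i \sum_j Defs.eta (pp M (ptrA rho) i j) = \sum_i HMB (M i) rho by [].
  apply: eq_bigr => i _; rewrite /HMB; apply: eq_bigr => j _.
  by rewrite (margB _ (hU i)).
have hI : \sum_i cmutinf (M i) rho - Imax M rho <= qmutinf rho.
  apply: le_trans (hE rho hs); rewrite /minS /Imax.
  apply: (big_ind (fun x => _ <= x)).
  - apply: sum_minus_one.
    have -> : [set i : 'I_d.+1 | i != ord_max] = ~: [set ord_max].
      by apply/setP => i; rewrite !inE.
    by rewrite cardsC1 card_ord.
  - by move=> x y hx hy; rewrite le_min hx hy.
  - by move=> S hS; apply: sum_minus_one.
have hH : forall i, HMM (M i) rho = HMA (M i) rho + HMB (M i) rho - cmutinf (M i) rho.
  by move=> i; rewrite /cmutinf; ring.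
rewrite (eq_bigr _ (fun i _ => hH i)) sumrB big_split /=.
lra.
Qed.
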